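(* Let $\mathcal A'$ be a tree weakening of a finite tree multi-algebra $\mathcal A$. Then (1) every basic relation closed under projection for $\mathcal A'$ is closed under projection for $\mathcal A$; and (2) every scenario that is algebraically closed for $\mathcal A'$ is algebraically closed for $\mathcal A$.
   Context: A finite non-associative algebra is a tuple $(\mathcal A,\cup,\neg,\emptyset,\mathcal B,\diamond,\overline{\cdot},e)$ where $(\mathcal A,\cup,\neg,\emptyset,\mathcal B)$ is a finite Boolean algebra and for all $x,y,z$: $\overline{\overline x}=x$, $\overline{x\cup y}=\overline x\cup\overline y$, $\overline{x\diamond y}=\overline y\diamond\overline x$, $e\diamond x=x\diamond e=x$, $x\diamond(y\cup z)=(x\diamond y)\cup(x\diamond z)$, $(x\diamond y)\cap\overline z=\emptyset\iff(y\diamond z)\cap\overline x=\emptyset$. $r\subseteq r'$ means $r\cup r'=r'$; atoms are basic relations; $\mathsf B_i$ denotes the atoms of $\mathcal A_i$. A projection operator from $\mathcal A$ to $\mathcal A'$ is a map $\Rsh$ with $\Rsh(r\cup r')=\Rsh r\cup\Rsh r'$ and $\Rsh\overline r=\overline{\Rsh r}$. A finite multi-algebra is a product $\mathcal A_1\times\cdots\times\mathcal A_m$ of finite non-associative algebras with projection operators $\Rsh_i^j:\mathcal A_i\to\mathcal A_j$ for distinct $i,j$; operations componentwise on $R=(R_1,\dots,R_m)$; $R$ basic if all $R_i$ are atoms; $R$ closed under projection if $R_j\subseteq\Rsh_i^jR_i$ for all distinct $i,j$. A network is a finite set $E$ of variables with a relation $N^{xy}$ for distinct $x,y$, $N^{yx}=\overline{N^{xy}}$;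 a scenario if all $N^{xy}$ basic; closed under composition if $N^{xz}\subseteq N^{xy}\diamond N^{yz}$ for all distinct $x,y,z$; algebraically closed if closed under composition and every $N^{xy}$ is closed under projection. The inverse projection $\check\Rsh_i^j:\mathcal A_j\to\mathcal A_i$ of $\Rsh_i^j$ is defined by: for $b\in\mathsf B_i$, $b'\in\mathsf B_j$, $b\subseteq\check\Rsh_i^jb'\iff b'\subseteq\Rsh_i^jb$. An anti-tree structure on $V$ is a directed graph $(V,E)$ with a root $r$ such that every $v\ne r$ has exactly one directed path to $r$; write $v\to v'$ for an edge. A plenary anti-tree structure of $\mathcal A$ is an anti-tree structure $\mathtt A$ on $\{1,\dots,m\}$ such that for all distinct $i,j$, with $i=k_0\to\cdots\to k_s\leftarrow\cdots\leftarrow k_{s+t+1}=j$ the shortest oriented chain between $i$ and $j$ in $\mathtt A$, every $b\in\mathsf B_i$ satisfies $\Rsh_i^jb\supseteq\check\Rsh_j^{k_{s+t}}\cdots\check\Rsh_{k_{s+1}}^{k_s}\Rsh_{k_{s-1}}^{k_s}\cdots\Rsh_i^{k_1}b$. $\mathcal A$ is a tree multi-algebra if it has one. $\mathcal A'$ is a weakening of $\mathcal A$ if it has the same algebras and operations and $\Rsh_i^jb\subseteq\Rsh_i'^jb$ for all distinct $i,j$ and atoms $b$ of $\mathcal A_i$ ($\Rsh'$ the projections of $\mathcal A'$). It is a tree weakening if moreover there is a plenary anti-tree structure $\mathtt A$ of $\mathcal A$ such that $\Rsh_i^jb=\Rsh_i'^jb$ for all atoms $b$ of $\mathcal A_i$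 whenever $i\to j$ is an edge of $\mathtt A$. *)

(* Defs.v *)
From mathcomp Require Import all_boot.

(* Its finite Boolean algebra is represented
   as the powerset {set atom_t} of its (finite) set of atoms (basic relations):
   union = :|:, intersection = :&:, empty = set0, top = setT, r ⊆ r' = \subset. *)
Record naAlg := NaAlg {
  atom_t : finType;
  conv : {set atom_t} -> {set atom_t};
  comp : {set atom_t} -> {set atom_t} -> {set atom_t};
  ident : {set atom_t}
}.

Definition naAlg_axioms (A : naAlg) : Prop :=
  (forall x, conv A (conv A x) = x) /\
  (forall x y, conv A (x :|: y) = conv A x :|: conv A y) /\
  (forall x y, conv A (comp A x y) = comp A (conv A y) (conv A x)) /\
  (forall x, comp A (ident A) x = x /\ comp A x (ident A) = x) /\
  (forall x y z, comp A x (y :|: z) = comp A x y :|: comp A x z) /\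
  (forall x y z, (comp A x y :&: conv A z == set0) = (comp A y z :&: conv A x == set0)).

Definition is_atom {A : naAlg} (X : {set atom_t A}) : Prop := exists b, X = [set b].

Definition is_projection {A1 A2 : naAlg} (f : {set atom_t A1} -> {set atom_t A2}) : Prop :=
  (forall r r', f (r :|: r') = f r :|: f r') /\ (forall r, f (conv A1 r) = conv A2 (f r)).

(* a family of projection maps Rsh_i^j on the multi-algebra A_1 x ... x A_m,
   indices 1..m represented by 'I_m *)
Definition projT {m : nat} (A : 'I_m -> naAlg) :=
  forall i j : 'I_m, {set atom_t (A i)} -> {set atom_t (A j)}.

Definition multi_algebra {m} {A : 'I_m -> naAlg} (P : projT A) : Prop :=
  (forall i, naAlg_axioms (A i)) /\ (forall i j, i != j -> is_projection (P i j)).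

(* inverse projection check-Rsh_i^j : A_j -> A_i; defined on atoms by
   b \subset check b' <-> b' \subset Rsh_i^j b, extended by unions *)
Definition inv_proj {m} {A : 'I_m -> naAlg} (P : projT A) (i j : 'I_m)
  (X : {set atom_t (A j)}) : {set atom_t (A i)} :=
  [set b | [exists b' in X, b' \in P i j [set b]]].

(* An oriented chain k0 -> ... -> k_s <- ... <- k_n, given by its start k = k0,
   the list ks = [k1; ...; kn] and the number s of upward steps. *)
Fixpoint updown {m} (E : rel 'I_m) (s : nat) (k : 'I_m) (ks : seq 'I_m) : bool :=
  match ks with
  | [::] => s == 0
  | k' :: ks' => (if 0 < s then E k k' else E k' k) && updown E s.-1 k' ks'
  end.

Definition shortest_chain {m} (E : rel 'I_m) (i : 'I_m) (ks : seq 'I_m) (s : nat) : Prop :=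
  updown E s i ks /\
  forall ks' s', updown E s' i ks' -> last i ks' = last i ks -> size ks <= size ks'.

Fixpoint chain_op {m} {A : 'I_m -> naAlg} (P : projT A) (s : nat) (k : 'I_m)
  (ks : seq 'I_m) (X : {set atom_t (A k)}) {struct ks} : {set atom_t (A (last k ks))} :=
  match ks return {set atom_t (A (last k ks))} with
  | [::] => X
  | k' :: ks' => chain_op P s.-1 k' ks'
                   (if 0 < s then P k k' X else inv_proj P k' k X)
  end.

Definition dpath_to {m} (E : rel 'I_m) (v r : 'I_m) (p : seq 'I_m) : Prop :=
  path E v p /\ last v p = r /\ uniq (v :: p).

Definition anti_tree {m} (E : rel 'I_m) (r : 'I_m) : Prop :=
  forall v, v != r -> exists p, dpath_to E v r p /\ forall q, dpath_to E v r q -> q = p.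

Definition plenary {m} {A : 'I_m -> naAlg} (P : projT A) (E : rel 'I_m) (r : 'I_m) : Prop :=
  anti_tree E r /\
  forall i ks s, shortest_chain E i ks s -> last i ks != i ->
    forall b : atom_t (A i), chain_op P s i ks [set b] \subset P i (last i ks) [set b].

Definition tree_multi {m} {A : 'I_m -> naAlg} (P : projT A) : Prop :=
  exists E r, plenary P E r.

Definition weakening {m} {A : 'I_m -> naAlg} (P P' : projT A) : Prop :=
  forall i j, i != j -> forall b : atom_t (A i), P i j [set b] \subset P' i j [set b].

Definition tree_weakening {m} {A : 'I_m -> naAlg} (P P' : projT A) : Prop :=
  weakening P P' /\
  exists E r, plenary P E r /\
    forall i j, E i j -> i != j -> forall b : atom_t (A i), P i j [set b] = P' i j [set b].

Definition mrel {m} (A : 'I_m -> naAlg) := forall i : 'I_m, {set atom_t (A i)}.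

Definition basic {m} {A : 'I_m -> naAlg} (R : mrel A) : Prop := forall i, is_atom (R i).

Definition closed_proj {m} {A : 'I_m -> naAlg} (P : projT A) (R : mrel A) : Prop :=
  forall i j, i != j -> R j \subset P i j (R i).

Definition is_network {m} {A : 'I_m -> naAlg} {V : finType} (N : V -> V -> mrel A) : Prop :=
  forall x y, x != y -> forall i, N y x i = conv (A i) (N x y i).

Definition scenario {m} {A : 'I_m -> naAlg} {V : finType} (N : V -> V -> mrel A) : Prop :=
  forall x y, x != y -> basic (N x y).

Definition closed_comp {m} {A : 'I_m -> naAlg} {V : finType} (N : V -> V -> mrel A) : Prop :=
  forall x y z, x != y -> y != z -> x != z ->
    forall i, N x z i \subset comp (A i) (N x y i) (N y z i).

Definition alg_closed {m} {A : 'I_m -> naAlg} (P : projT A) {V : finType}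
  (N : V -> V -> mrel A) : Prop :=
  closed_comp N /\ forall x y, x != y -> closed_proj P (N x y).

(* Main.v *)
Require Import Defs.
From mathcomp Require Import all_boot.
From Stdlib Require Import Classical.

Lemma ex_min (Q : nat -> Prop) : (exists n, Q n) -> exists n, Q n /\ forall k, Q k -> n <= k.
Proof.
move=> [n Qn].
suff H : forall N n, n <= N -> Q n -> exists m, Q m /\ forall k, Q k -> m <= k.
  exact: (H n n (leqnn n) Qn).
elim=> [|N IH] {}n hn {}Qn.
  exists n; split=> // k _; move: hn; rewrite leqn0 => /eqP ->; done.
case: (classic (exists k, Q k /\ k < n)) => [[k [Qk lt]]|hno].
  apply: (IH k) => //; rewrite -ltnS; exact: leq_trans lt hn.
exists n; split=> // k Qk; rewrite leqNgt; apply/negP => lt; apply: hno; by exists k.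
Qed.

Lemma remove_loop {m} {E : rel 'I_m} : forall ks k s, updown E s k ks ->
  ~~ path (fun a b => a != b) k ks ->
  exists ks', size ks' < size ks /\ last k ks' = last k ks /\
    (updown E s k ks' \/ (0 < s /\ updown E s.-1 k ks')).
Proof.
elim=> [|k' ks IH] k s //=.
move=> /andP[hstep hud].
case: (eqVneq k k') => [e|neq] /=; first subst k'.
  exists ks; split=> //; split=> //.
  by case: s hstep hud => [|s] /= _ hud; [left|right].
move=> hp; have [ks' [hs [hl [h|[hpos h]]]]] := IH k' s.-1 hud hp.
  exists (k' :: ks'); split=> //; split=> //; left; by rewrite /= hstep h.
exists (k' :: ks'); split=> //; split=> //; right.
case: s hstep hud hpos h => [|s] //= hstep _ hpos h.
by rewrite hpos hstep h.
Qed.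

Lemma proj_mono {A1 A2 : naAlg} (f : {set atom_t A1} -> {set atom_t A2}) (X Y : {set atom_t A1}) :
  is_projection f -> X \subset Y -> f X \subset f Y.
Proof. move=> [hU _] hXY; by rewrite -(setUidPr hXY) hU subsetUl. Qed.

Lemma chain_closed {m} {A : 'I_m -> naAlg} {P P' : projT A} {E : rel 'I_m} {R : mrel A} :
  (forall i j, i != j -> is_projection (P i j)) ->
  (forall i j, E i j -> i != j -> forall b, P i j [set b] = P' i j [set b]) ->
  basic R -> closed_proj P' R ->
  forall ks k s (X : {set atom_t (A k)}), updown E s k ks ->
    path (fun a b => a != b) k ks -> R k \subset X ->
    R (last k ks) \subset chain_op P s k ks X.
Proof.
move=> hproj hedge hR hcl.
elim=> [|k' ks IH] k s X //=.
move=> /andP[hstep hud] /andP[neq hp] hX.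
apply: IH => //.
have [b hb] := hR k; have [c hc] := hR k'.
move: hstep; case: ifP => _ hstep.
  have h := hcl k k' neq; rewrite hb -hedge // in h.
  apply: subset_trans h _; apply: proj_mono; first exact: hproj.
  by rewrite -hb.
have neq' : k' != k by rewrite eq_sym.
have h := hcl k' k neq'.
rewrite hc -hedge // ?(eq_sym k') // in h.
rewrite hc sub1set inE; apply/existsP; exists b.
rewrite hb sub1set in hX; rewrite hX /=.
by rewrite hb sub1set in h.
Qed.

Lemma up_path {m} {E : rel 'I_m} p v : path E v p -> updown E (size p) v p.
Proof. elim: p v => [|w p IH] v //= /andP[hE hp]; by rewrite hE IH. Qed.

Lemma updown_rcons {m} {E : rel 'I_m} ks k x :
  updown E 0 k ks -> E x (last k ks) -> updown E 0 k (rcons ks x).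
Proof.
elim: ks k => [|k' ks IH] k /=; first by move=> _ ->.
move=> /andP[h1 h2] h3; by rewrite h1 IH.
Qed.

Lemma down_path {m} {E : rel 'I_m} p v : path E v p ->
  exists ks, updown E 0 (last v p) ks /\ last (last v p) ks = v.
Proof.
elim: p v => [|w p IH] v /=; first by move=> _; exists [::].
move=> /andP[hE hp]; have [ks [hu hl]] := IH w hp.
exists (rcons ks v); split; last by rewrite last_rcons.
apply: updown_rcons => //; by rewrite hl.
Qed.

Lemma updown_cat {m} {E : rel 'I_m} ks1 ks2 k s :
  updown E s k ks1 -> updown E 0 (last k ks1) ks2 -> updown E s k (ks1 ++ ks2).
Proof.
elim: ks1 k s => [|k' ks IH] k s /=; first by move=> /eqP ->.
move=> /andP[h1 h2] h3; by rewrite h1 IH.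
Qed.

Theorem lemma6p29 (m : nat) (A : 'I_m -> naAlg) (P P' : projT A) :
  multi_algebra P -> multi_algebra P' -> tree_multi P -> tree_weakening P P' ->
  (forall R : mrel A, basic R -> closed_proj P' R -> closed_proj P R) /\
  (forall (V : finType) (N : V -> V -> mrel A),
     is_network N -> scenario N -> alg_closed P' N -> alg_closed P N).
Proof.
move=> [hA hPproj] _ _ [hweak [E [r [[hanti hplen] hedge]]]].
have up : forall v, exists ks s, updown E s v ks /\ last v ks = r.
  move=> v; case: (eqVneq v r) => [->|hv]; first by exists [::], 0.
  have [p [[hpath [hlast _]] _]] := hanti v hv.
  exists p, (size p); split=> //; exact: up_path.
have down : forall v, exists ks, updown E 0 r ks /\ last r ks = v.
  move=> v; case: (eqVneq v r) => [->|hv]; first by exists [::].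
  have [p [[hpath [hlast _]] _]] := hanti v hv.
  have [ks [hu hl]] := down_path _ _ hpath; rewrite hlast in hu hl; by exists ks.
have part1 : forall R : mrel A, basic R -> closed_proj P' R -> closed_proj P R.
  move=> R hR hcl i j hij.
  have [ks1 [s1 [hu1 hl1]]] := up i.
  have [ks2 [hu2 hl2]] := down j.
  have hex : exists n, exists ks s, updown E s i ks /\ last i ks = j /\ size ks = n.
    exists (size (ks1 ++ ks2)), (ks1 ++ ks2), s1; split=> //.
      by apply: updown_cat; rewrite // hl1.
    by rewrite last_cat hl1.
  have [n [[ks [s [hud [hl hsz]]]] hmin]] := ex_min _ hex.
  have hsh : shortest_chain E i ks s.
    split=> // ks' s' hud' hl'; rewrite hsz; apply: hmin; exists ks', s'.
    by rewrite hl' hl.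
  have hp : path (fun a b => a != b) i ks.
    apply/negPn/negP => hnp.
    have [ks' [hs' [hl' hu']]] := remove_loop _ _ _ hud hnp.
    have : size ks <= size ks' by case: hu' => [h|[_ h]]; exact: (hsh.2 _ _ h hl').
    by rewrite leqNgt hs'.
  rewrite -hl in hij *.
  have h1 := chain_closed hPproj hedge hR hcl _ _ _ _ hud hp (subxx (R i)).
  have [b hb] := hR i.
  rewrite hb in h1 *.
  apply: subset_trans h1 _; apply: hplen => //; by rewrite eq_sym.
split=> // V N hN hsc [hcomp hcl]; split=> // x y hxy.
apply: part1; [exact: hsc|exact: hcl].
Qed.
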